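(* Let $n\geq k\geq 3$ be odd integers with $\gcd(n,k-1)=1$. Then there exists a diagonal $\mathrm{M}^0_{\mathbb Z_k\oplus\mathbb Z_n}(n,n;k,k)$.
   Context: Let $(\Gamma,+)$ be an abelian group. A partially filled array is an array in which some cells may be empty. A zero-sum magic partially filled array $\mathrm{M}^0_\Gamma(n,n;k,k)$ is an $n\times n$ partially filled array with entries in $\Gamma$ in which every element of $\Gamma$ appears exactly once, each row and each column contains exactly $k$ filled cells, and the entries of each row and of each column sum to $0_\Gamma$. For an $n\times n$ partially filled array, cell $(i,j)$ belongs to the diagonal $D_r$ if $j-i\equiv r\pmod n$; such an array is diagonal if its nonempty cells are exactly those of $k$ consecutive diagonals (indices mod $n$). $\mathbb Z_N$ is the cyclic group of order $N$. *)

(* Defs.v *)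
From mathcomp Require Import all_boot all_order all_algebra.
Set Implicit Arguments. Unset Strict Implicit. Unset Printing Implicit Defensive.
Import GRing.Theory.
Local Open Scope ring_scope.

(* A partially filled n x n array with entries in G: None = empty cell. *)
Definition pfarray (G : Type) (n : nat) := 'I_n -> 'I_n -> option G.

Definition entry (G : zmodType) n (A : pfarray G n) i j : G := odflt 0 (A i j).

(* Zero-sum magic partially filled array M^0_G(n,n;k,k). *)
Definition zero_sum_magic (G : zmodType) (n k : nat) (A : pfarray G n) : Prop :=
  [/\
      (forall g : G, #|[set p : 'I_n * 'I_n | A p.1 p.2 == Some g]| = 1%N),
      (forall i : 'I_n, #|[set j : 'I_n | A i j != None]| = k),
      (forall j : 'I_n, #|[set i : 'I_n | A i j != None]| = k),
      (forall i : 'I_n, \sum_(j < n) entry A i j = 0) &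
      (forall j : 'I_n, \sum_(i < n) entry A i j = 0)].

Definition diag_index n (i j : 'I_n) : nat := ((j + n - i) %% n)%N.

Definition is_diagonal (G : eqType) (n k : nat) (A : pfarray G n) : Prop :=
  exists r : nat, forall i j : 'I_n,
    A i j != None <-> exists2 t : nat, (t < k)%N & diag_index i j = ((r + t) %% n)%N.

(* Main.v *)
Require Import Defs.
From mathcomp Require Import all_boot all_order all_algebra.
From mathcomp Require Import zify.
Import GRing.Theory.

Lemma mod2 n x : (x < n + n)%N -> (x %% n = (if x < n then x else x - n))%N.
Proof.
move=> hx; case: ifP => h; first by rewrite modn_small.
rewrite {1}(_ : x = (x - n) + n)%N; last lia.
by rewrite modnDr modn_small; lia.
Qed.

Lemma ord_pos {n} (i : 'I_n) : (0 < n)%N.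
Proof. exact: leq_ltn_trans (leq0n i) (ltn_ord i). Qed.

Definition phi {n} (i : 'I_n) (t : nat) : 'I_n := Ordinal (ltn_pmod (i + t) (ord_pos i)).
Definition psi {n} (j : 'I_n) (t : nat) : 'I_n := Ordinal (ltn_pmod (j + n - t) (ord_pos j)).

Lemma diag_phi {n} (i : 'I_n) t : (t < n)%N -> diag_index i (phi i t) = t.
Proof.
move=> Ht; rewrite /diag_index /=; have Hi := ltn_ord i.
rewrite (@mod2 n (i + t)); last lia.
case: ifP => h; rewrite mod2; try lia; case: ifP; lia.
Qed.

Lemma phi_diag {n} (i j : 'I_n) : phi i (diag_index i j) = j.
Proof.
apply: val_inj; rewrite /diag_index /=; have Hi := ltn_ord i; have Hj := ltn_ord j.
rewrite (@mod2 n (j + n - i)); last lia.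
case: ifP => h; rewrite mod2; try lia; case: ifP; lia.
Qed.

Lemma diag_psi {n} (j : 'I_n) t : (t < n)%N -> diag_index (psi j t) j = t.
Proof.
move=> Ht; rewrite /diag_index /=; have Hj := ltn_ord j.
rewrite (@mod2 n (j + n - t)); last lia.
case: ifP => h; rewrite mod2; try lia; case: ifP; lia.
Qed.

Lemma diag_lt {n} (i j : 'I_n) : (diag_index i j < n)%N.
Proof. exact: ltn_pmod (ord_pos i). Qed.

Lemma phi_inj {n} (i : 'I_n) : injective (fun t : 'I_n => phi i t).
Proof. by move=> t1 t2 /(congr1 (diag_index i)); rewrite !diag_phi // => /val_inj. Qed.

Lemma psi_inj {n} (j : 'I_n) : injective (fun t : 'I_n => psi j t).
Proof. by move=> t1 t2 /(congr1 (fun x => diag_index x j)); rewrite !diag_psi // => /val_inj. Qed.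

Lemma sum_nat_odd k : odd k -> (\sum_(t < k) t = k * k./2)%N.
Proof.
move=> ok.
have H2 : forall m, ((\sum_(t < m) t) * 2 = m * m.-1)%N.
  elim=> [|m IH]; first by rewrite big_ord0.
  rewrite big_ord_recr /= mulnDl IH; case: m {IH} => [|m] //=; lia.
have := H2 k; have := odd_double_half k; rewrite ok /=.
set h := k./2; set S := (\sum_(t < k) t)%N; rewrite -!muln2 => E1 E2.
nia.
Qed.

From mathcomp Require Import ring.
Local Open Scope ring_scope.

Definition cc (n k : nat) (t : nat) : 'Z_n := if t == k./2 then 1 - k%:R else 1.

Lemma half_lt {k} : odd k -> (k./2 < k)%N.
Proof. move=> ok; have := odd_double_half k; rewrite ok -muln2 /=; lia. Qed.

Lemma sum_cc n k (f : nat -> 'Z_n) : odd k ->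
  \sum_(t < k) cc n k t * f t = \sum_(t < k) f t - k%:R * f k./2.
Proof.
move=> ok; pose m0 : 'I_k := Ordinal (half_lt ok).
rewrite (bigD1 m0) // [in RHS](bigD1 m0) //= /cc eqxx.
rewrite (eq_bigr (fun t : 'I_k => f t)); last first.
  by move=> i hi; rewrite ifF ?mul1r //; apply/negbTE; move: hi; apply: contra => /eqP h; apply/eqP/val_inj.
set S := \sum_(_ < _ | _) _; ring.
Qed.

Lemma sum_nat_Z n k : odd k -> \sum_(t < k) (t%:R : 'Z_n) = (k * k./2)%:R.
Proof. by move=> ok; rewrite -natr_sum sum_nat_odd. Qed.

Lemma pair_sum0 (A B : zmodType) m (F : 'I_m -> A * B) :
  \sum_(t < m) (F t).1 = 0 -> \sum_(t < m) (F t).2 = 0 -> \sum_(t < m) F t = 0.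
Proof.
move=> h1 h2.
have e1 : (\sum_(t < m) F t).1 = \sum_(t < m) (F t).1.
  by apply: (big_morph fst) => // x y.
have e2 : (\sum_(t < m) F t).2 = \sum_(t < m) (F t).2.
  by apply: (big_morph snd) => // x y.
by rewrite [LHS]surjective_pairing e1 e2 h1 h2.
Qed.

Definition arr (n k : nat) : pfarray ('Z_k * 'Z_n) n :=
  fun i j => if (diag_index i j < k)%N
    then Some ((diag_index i j)%:R, cc n k (diag_index i j) * (i : nat)%:R) else None.

Section Main.
Variables (n k : nat) (hn : (1 < n)%N) (hk : (1 < k)%N) (kn : (k <= n)%N) (ok : odd k)
  (cop : coprime n k.-1).

Lemma sumZk : \sum_(t < k) ((t : nat)%:R : 'Z_k) = 0.
Proof. by rewrite sum_nat_Z // natrM pchar_Zp // mul0r. Qed.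

Lemma sum_cc1 : \sum_(t < k) cc n k t = 0.
Proof.
transitivity (\sum_(t < k) cc n k t * 1); first by apply: eq_bigr => t _; rewrite mulr1.
rewrite (sum_cc _ _ (fun _ => 1)) //.
by rewrite sumr_const card_ord mulr1 subrr.
Qed.

Lemma sum_cct : \sum_(t < k) cc n k t * (t : nat)%:R = 0.
Proof. by rewrite (sum_cc _ _ (fun t => t%:R)) // sum_nat_Z // natrM subrr. Qed.

Lemma row_sum (i : 'I_n) : \sum_(j < n) entry (arr n k) i j = 0.
Proof.
rewrite (reindex_inj (phi_inj i)) /=.
rewrite (eq_bigr (fun t : 'I_n => if (t < k)%N then (((t : nat)%:R : 'Z_k), cc n k t * (i : nat)%:R) else 0)); last first.
  by move=> t _; rewrite /entry /arr diag_phi //; case: ifP.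
rewrite -big_mkcond /=.
rewrite -(@big_ord_widen _ 0 +%R k n (fun t : nat => ((t%:R : 'Z_k), cc n k t * (i : nat)%:R)) kn).
apply: pair_sum0 => /=; first exact: sumZk.
by rewrite -mulr_suml sum_cc1 mul0r.
Qed.

Lemma natr_modZ x : ((x %% n)%:R : 'Z_n) = x%:R.
Proof. by apply: val_inj; rewrite /= !val_Zp_nat // modn_mod. Qed.

Lemma psiR (j : 'I_n) t : (t < n)%N -> ((psi j t : nat)%:R : 'Z_n) = (j : nat)%:R - t%:R.
Proof.
move=> ht; rewrite /= natr_modZ natrB; last by lia.
by rewrite natrD pchar_Zp // addr0.
Qed.

Lemma col_sum (j : 'I_n) : \sum_(i < n) entry (arr n k) i j = 0.
Proof.
rewrite (reindex_inj (psi_inj j)) /=.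
rewrite (eq_bigr (fun t : 'I_n => if (t < k)%N then (((t : nat)%:R : 'Z_k), cc n k t * (psi j t : nat)%:R) else 0)); last first.
  by move=> t _; rewrite /entry /arr diag_psi //; case: ifP.
rewrite -big_mkcond /=.
rewrite -(@big_ord_widen _ 0 +%R k n (fun t : nat => ((t%:R : 'Z_k), cc n k t * (psi j t : nat)%:R)) kn).
apply: pair_sum0 => /=; first exact: sumZk.
rewrite (eq_bigr (fun t : 'I_k => cc n k t * (j : nat)%:R - cc n k t * (t : nat)%:R)); last first.
  move=> t _; rewrite psiR ?mulrBr //; exact: leq_trans (ltn_ord t) kn.
by rewrite sumrB -mulr_suml sum_cc1 sum_cct mul0r subrr.
Qed.

Lemma row_card (i : 'I_n) : #|[set j : 'I_n | arr n k i j != None]| = k.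
Proof.
rewrite -sum1_card (reindex_inj (phi_inj i)) /=.
rewrite (eq_bigl (fun t : 'I_n => (t < k)%N)); last first.
  by move=> t; rewrite inE /arr diag_phi //; case: ifP.
rewrite -(@big_ord_widen nat 0%N addn k n (fun _ => 1%N) kn).
by rewrite sum1_card card_ord.
Qed.

Lemma col_card (j : 'I_n) : #|[set i : 'I_n | arr n k i j != None]| = k.
Proof.
rewrite -sum1_card (reindex_inj (psi_inj j)) /=.
rewrite (eq_bigl (fun t : 'I_n => (t < k)%N)); last first.
  by move=> t; rewrite inE /arr diag_psi //; case: ifP.
rewrite -(@big_ord_widen nat 0%N addn k n (fun _ => 1%N) kn).
by rewrite sum1_card card_ord.
Qed.

Lemma arr_diag : is_diagonal k (arr n k).
Proof.
exists 0%N => i j; rewrite /arr; split.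
  case: ifP => // h _; exists (diag_index i j) => //; rewrite add0n modn_small //; exact: diag_lt.
case=> t ht ->; rewrite add0n modn_small ?ht //; exact: leq_trans ht kn.
Qed.

Lemma uniq_cell g : #|[set p : 'I_n * 'I_n | arr n k p.1 p.2 == Some g]| = 1%N.
Proof.
case: g => a b.
have ha : (a < k)%N by rewrite -[X in (_ < X)%N](Zp_cast hk) ltn_ord.
set t := (a : nat).
have cu : cc n k t \is a GRing.unit.
  rewrite /cc; case: ifP => _; last exact: unitr1.
  have e : (k%:R : 'Z_n) = (k.-1)%:R + 1 by rewrite natr1 prednK // ltnW.
  have -> : 1 - k%:R = - (k.-1)%:R :> 'Z_n by rewrite e; ring.
  by rewrite unitrN unitZpE.
set b' := b / cc n k t.
have hb : (b' < n)%N by rewrite -[X in (_ < X)%N](Zp_cast hn) ltn_ord.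
pose i0 : 'I_n := Ordinal hb.
rewrite (_ : [set p | _] = [set (i0, phi i0 t)]) ?cards1 //.
apply/setP => -[i j]; rewrite !inE /=.
apply/eqP/eqP.
  rewrite /arr; case: ifP => // hd [ea eb].
  have et : diag_index i j = t.
    by move: (congr1 (@nat_of_ord _) ea); rewrite val_Zp_nat // modn_small.
  rewrite et in eb.
  have ei : i = i0.
    apply: val_inj => /=.
    have : (i : nat)%:R = b' :> 'Z_n by rewrite /b' -eb mulrC mulKr.
    by move/(congr1 (@nat_of_ord _)); rewrite val_Zp_nat // modn_small.
  by rewrite -ei -et phi_diag.
case=> -> ->; rewrite /arr diag_phi ?(leq_trans ha kn) // ha.
congr (Some (_, _)); first exact: natr_Zp.
rewrite (_ : (i0 : nat)%:R = b'); last exact: natr_Zp.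
by rewrite mulrC divrK.
Qed.

End Main.

Theorem mainTheorem10 (n k : nat) :
  (3 <= k)%N -> (k <= n)%N -> odd n -> odd k -> coprime n k.-1 ->
  exists A : pfarray ('Z_k * 'Z_n)%type n,
    zero_sum_magic k A /\ is_diagonal k A.
Proof.
move=> h3 hkn _ ok cop.
have hk : (1 < k)%N by lia.
have hn : (1 < n)%N by lia.
exists (arr n k); split; last exact: arr_diag.
split.
- exact: uniq_cell.
- exact: row_card.
- exact: col_card.
- exact: row_sum.
- exact: col_sum.
Qed.
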